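(* Let $N\ge 2$ and $M\ge 1$ be integers and consider the indirect control system described in the context, with real Lie algebra $\mathcal{L}$ generated by $iH_0$ and $iH_x^j=i(1_S\otimes\sigma_x^j)$, $iH_y^j=i(1_S\otimes\sigma_y^j)$, $j=1,\dots,M$. If $i(1_S\otimes\sigma_x^j\sigma_x^{j+1})\in\mathcal{L}$ for every $j=1,2,\dots,M-1$, then $i(1_S\otimes\sigma_{[\alpha]})\in\mathcal{L}$ for every $[\alpha]=(\alpha_1,\dots,\alpha_M)\in\{x,y,z,0\}^M$ with $[\alpha]\neq(0,0,\dots,0)$.
   Context: The controlled system is $\mathbb{C}^N$ with orthonormal basis $|1\rangle,\dots,|N\rangle$; $e_{jk}=|j\rangle\langle k|$. $H_S=\sum_{j=1}^N E_j e_{jj}$ with real $E_j$, $\sum_j E_j=0$. For $1\le j<k\le N$: $x_{jk}=e_{jk}+e_{kj}$, $y_{jk}=i(e_{jk}-e_{kj})$, $h_j=e_{jj}-e_{j+1,j+1}$; $x_j=x_{j,j+1}$, $y_j=y_{j,j+1}$; $s_j^{(1)}=x_j$, $s_j^{(2)}=y_j$. The accessor is $(\mathbb{C}^2)^{\otimes M}$ ($M$ qubits); $\sigma_\alpha^j=1\otimes\cdots\otimes\sigma_\alpha\otimes\cdots\otimes 1$ is the Pauli matrix $\sigma_\alpha$ ($\alpha=x,y,z$) acting on the $j$-th qubit, $\sigma_0=1$, and for $[\alpha]\in\{x,y,z,0\}^M$, $\sigma_{[\alpha]}=\prod_{j=1}^M\sigma^j_{\alpha_j}$. $1_S,1_A$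 denote identities. $H_A=\sum_{j=1}^M\hbar\omega_j\sigma_z^j+\sum_{j=1}^{M-1}c_j\sigma_x^j\sigma_x^{j+1}$ (real $\omega_j,c_j$); $H_S'=\sum_{j=1}^{N-1}d_j x_j\otimes 1_A$ (real $d_j$); $H_{SA}=\sum_{j=1}^{N-1}\sum_{k=1}^2\sum_{[\alpha]\in\{x,y\}^M} g^{j(k)}_{[\alpha]}\, s_j^{(k)}\otimes\sigma_{[\alpha]}$ (real coefficients); $H_0=H_S\otimes 1_A+H_S'+1_S\otimes H_A+H_{SA}$. *)

(* Defs.v *)
From HB Require Import structures.
From mathcomp Require Import all_boot all_order all_algebra.
From mathcomp Require Import complex mxtens.
Set Implicit Arguments. Unset Strict Implicit. Unset Printing Implicit Defensive.
Import Order.TTheory GRing.Theory Num.Theory.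
Local Open Scope ring_scope.
Local Open Scope complex_scope.

Section Defs.
Variable R : rcfType.
Local Notation C := (R[i]).
Definition iC : C := Complex 0 1.

Fixpoint pow2 (n : nat) : nat := match n with 0 => 1 | S n' => 2 * pow2 n' end.

Inductive pauli := P0 | PX | PY | PZ.

Definition pauli_mx (a : pauli) : 'M[C]_2 :=
  match a with
  | P0 => 1%:M
  | PX => \matrix_(r < 2, s < 2) (if r == s then 0 else 1)
  | PY => \matrix_(r < 2, s < 2)
            (if r == s then 0 else if (r == 0 :> nat) then - iC else iC)
  | PZ => \matrix_(r < 2, s < 2)
            (if r == s then (if (r == 0 :> nat) then 1 else -1) else 0)
  end.

(* Kronecker product f 0 (x) f 1 (x) ... (x) f (n-1) (qubit 1 leftmost) *)
Fixpoint ktens (n : nat) (f : nat -> 'M[C]_2) : 'M[C]_(pow2 n) :=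
  match n as n0 return 'M[C]_(pow2 n0) with
  | 0 => 1%:M
  | S n' => tensmx (f 0) (ktens n' (fun k => f k.+1))
  end.

(* sigma_a^j : Pauli a on the j-th qubit (0-based j), identity elsewhere *)
Definition sigma_site (M j : nat) (a : pauli) : 'M[C]_(pow2 M) :=
  ktens M (fun k => if k == j then pauli_mx a else 1%:M).

Definition sigma_string (M : nat) (al : 'I_M -> pauli) : 'M[C]_(pow2 M) :=
  \big[mulmx/1%:M]_(j < M) sigma_site M j (al j).

(* e_{jk} = |j><k| on C^N (0-based indices) *)
Definition emat (N j k : nat) : 'M[C]_N :=
  \matrix_(a < N, b < N) (((a == j :> nat) && (b == k :> nat))%:R).

(* x_j = x_{j,j+1}, y_j = y_{j,j+1} (0-based j) *)
Definition xs (N j : nat) : 'M[C]_N := emat N j j.+1 + emat N j.+1 j.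
Definition ys (N j : nat) : 'M[C]_N := iC *: (emat N j j.+1 - emat N j.+1 j).
(* s_j^(1) = x_j, s_j^(2) = y_j ; k : 'I_2 with 0 <-> (1), 1 <-> (2) *)
Definition sop (N j : nat) (k : 'I_2) : 'M[C]_N :=
  if k == 0 :> nat then xs N j else ys N j.

Definition otimes (N M : nat) (A : 'M[C]_N) (B : 'M[C]_(pow2 M))
  : 'M[C]_(N * pow2 M) := tensmx A B.

(* The total Hamiltonian H_0 = H_S (x) 1_A + H_S' + 1_S (x) H_A + H_SA.
   Couplings in H_SA are indexed by [alpha] in {x,y}^M, encoded as
   b : {ffun 'I_M -> bool} (false = x, true = y). *)
Definition xy (b : bool) : pauli := if b then PY else PX.

Definition H0 (N M : nat) (E : 'I_N -> R) (d : nat -> R) (hbar : R)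
  (omega : nat -> R) (c : nat -> R)
  (g : nat -> 'I_2 -> {ffun 'I_M -> bool} -> R) : 'M[C]_(N * pow2 M) :=
  let HS := \sum_(j < N) (E j)%:C *: emat N j j in
  let HS' := \sum_(j < N.-1) (d j)%:C *: otimes (xs N j) (1%:M : 'M_(pow2 M)) in
  let HA := \sum_(j < M) (hbar * omega j)%:C *: sigma_site M j PZ
            + \sum_(j < M.-1) (c j)%:C *: (sigma_site M j PX *m sigma_site M j.+1 PX) in
  let HSA := \sum_(j < N.-1) \sum_(k < 2) \sum_(b : {ffun 'I_M -> bool})
               (g j k b)%:C *: otimes (sop N j k) (sigma_string (fun q => xy (b q))) in
  otimes HS 1%:M + HS' + otimes (1%:M) HA + HSA.

Inductive lie_gen (n : nat) (S : 'M[C]_n -> Prop) : 'M[C]_n -> Prop :=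
| lie_base X : S X -> lie_gen S X
| lie_zero : lie_gen S 0
| lie_add X Y : lie_gen S X -> lie_gen S Y -> lie_gen S (X + Y)
| lie_scale (r : R) X : lie_gen S X -> lie_gen S (r%:C *: X)
| lie_bracket X Y : lie_gen S X -> lie_gen S Y -> lie_gen S (X *m Y - Y *m X).

Definition ctrl_gens (N M : nat) (H : 'M[C]_(N * pow2 M)) (X : 'M[C]_(N * pow2 M)) : Prop :=
  X = iC *: H \/
  exists j : 'I_M, X = iC *: otimes (1%:M : 'M_N) (sigma_site M j PX)
                \/ X = iC *: otimes (1%:M : 'M_N) (sigma_site M j PY).

End Defs.

(* Main.v *)
Require Import Defs.
From HB Require Import structures.
From mathcomp Require Import all_boot all_order all_algebra.
From mathcomp Require Import complex mxtens zify.
Import GRing.Theory Num.Theory.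
Set Implicit Arguments. Unset Strict Implicit.
Local Open Scope ring_scope.
Local Open Scope complex_scope.
Definition pauli_eqb (a b : pauli) : bool :=
  match a, b with P0, P0 | PX, PX | PY, PY | PZ, PZ => true | _, _ => false end.
Lemma pauli_eqP : Equality.axiom pauli_eqb.
Proof. by case; case; constructor. Qed.
HB.instance Definition _ := hasDecEq.Build pauli pauli_eqP.
Section S.
Variable R : rcfType.
Local Notation C := (R[i]).
Definition pm (a b : pauli) : pauli :=
  match a, b with
  | P0, b => b | a, P0 => a
  | PX, PX | PY, PY | PZ, PZ => P0
  | PX, PY | PY, PX => PZ
  | PY, PZ | PZ, PY => PX
  | PZ, PX | PX, PZ => PY
  end.
Definition ph (a b : pauli) : C :=
  match a, b with
  | PX, PY | PY, PZ | PZ, PX => iC R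
  | PY, PX | PZ, PY | PX, PZ => - iC R
  | _, _ => 1
  end.
Definition sg (a b : pauli) : C :=
  match a, b with
  | P0, _ | _, P0 | PX, PX | PY, PY | PZ, PZ => 1
  | _, _ => -1
  end.
Lemma iCi : iC R * iC R = -1.
Proof. by rewrite /iC -expr2 sqr_i. Qed.
Lemma pauli_mul a b : pauli_mx R a *m pauli_mx R b = ph a b *: pauli_mx R (pm a b).
Proof.
case: a; case: b; rewrite /= ?mul1mx ?mulmx1 ?scale1r //;
apply/matrixP => r s; rewrite !mxE !big_ord_recr big_ord0 !mxE;
case: r => [[|[|//]]] ?; case: s => [[|[|//]]] ? /=;
rewrite ?mulr0 ?mul0r ?mulr1 ?mul1r ?addr0 ?add0r ?mulrN ?mulNr ?iCi ?opprK ?mulr1 ?mul1r //.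
Qed.
Lemma pm_comm a b : pm a b = pm b a. Proof. by case: a; case: b. Qed.
Lemma ph_swap a b : ph b a = sg a b * ph a b.
Proof. by case: a; case: b; rewrite /= ?mul1r ?mulN1r ?opprK. Qed.
Lemma ph_sq a b : ph a b ^+ 2 = sg a b.
Proof. by case: a; case: b; rewrite /= ?expr1n ?sqrrN ?expr2 ?iCi. Qed.
Lemma sg_a0 a : sg a P0 = 1. Proof. by case: a. Qed.
Lemma pm_a0 a : pm a P0 = a. Proof. by case: a. Qed.

Lemma tensmxZZ m n p q (a b : C) (A : 'M[C]_(m,n)) (B : 'M[C]_(p,q)) :
  (a *: A) *t (b *: B) = (a * b) *: (A *t B).
Proof. by apply/matrixP => i j; rewrite !mxE mulrACA. Qed.
Lemma tensmx1B m n p q (A : 'M[C]_(m,n)) (B D : 'M[C]_(p,q)) :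
  A *t (B - D) = A *t B - A *t D.
Proof. by apply/matrixP => i j; rewrite !mxE mulrBr. Qed.
Lemma tensmx11 m n : (1%:M : 'M[C]_m) *t (1%:M : 'M[C]_n) = 1%:M.
Proof.
apply/matrixP => i j.
case: (mxtens_indexP i) => i1 i2; case: (mxtens_indexP j) => j1 j2.
rewrite tensmxE !mxE (can_eq (@mxtens_indexK _ _)) xpair_eqE.
by case: eqP; case: eqP; rewrite /= ?mulr1 ?mulr0 ?mul0r.
Qed.

Lemma ktens_ext n (f g : nat -> 'M[C]_2) :
  (forall k, (k < n)%N -> f k = g k) -> ktens n f = ktens n g.
Proof.
elim: n f g => [//|n IH] f g H /=.
by rewrite H // (IH (fun k => f k.+1) (fun k => g k.+1)) // => k hk; apply: H.
Qed.
Lemma ktens_mul n (f g : nat -> 'M[C]_2) :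
  ktens n f *m ktens n g = ktens n (fun k => f k *m g k).
Proof.
elim: n f g => [|n IH] f g /=; first by rewrite mul1mx.
by rewrite tensmx_mul IH.
Qed.
Lemma ktens_scale n (c : nat -> C) (A : nat -> 'M[C]_2) :
  ktens n (fun k => c k *: A k) = (\prod_(k < n) c k) *: ktens n A.
Proof.
elim: n c A => [|n IH] c A /=; first by rewrite big_ord0 scale1r.
rewrite IH tensmxZZ big_ord_recl; congr (_ * _ *: _).
Qed.
Lemma ktens_one n : ktens n (fun _ => (1%:M : 'M[C]_2)) = 1%:M.
Proof. by elim: n => [//|n IH] /=; rewrite IH tensmx11. Qed.

Definition T n (f : nat -> pauli) := ktens n (fun k => pauli_mx R (f k)).
Lemma T_mul n f g : T n f *m T n g =
  (\prod_(k < n) ph (f k) (g k)) *: T n (fun k => pm (f k) (g k)).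
Proof.
rewrite /T ktens_mul -(ktens_scale n (fun k => ph (f k) (g k)) (fun k => pauli_mx R (pm (f k) (g k)))); apply: ktens_ext => k _; exact: pauli_mul.
Qed.
Variables (N M : nat) (S : 'M[C]_(N * pow2 M) -> Prop).
Definition O (A : 'M[C]_(pow2 M)) := otimes (1%:M : 'M[C]_N) A.
Lemma O_mul A B : O A *m O B = O (A *m B).
Proof. by rewrite /O /otimes tensmx_mul mulmx1. Qed.
Lemma O_scale c A : O (c *: A) = c *: O A.
Proof. by rewrite /O /otimes -[1%:M in LHS]scale1r tensmxZZ mul1r. Qed.
Definition mem f := lie_gen S (iC R *: O (T M f)).

Lemma two_neq0 : (2%:R : C) != 0.
Proof. by rewrite pnatr_eq0. Qed.

Lemma mem_comm f g h : mem f -> mem g ->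
  \prod_(k < M) sg (f k) (g k) = -1 ->
  (forall k, (k < M)%N -> h k = pm (f k) (g k)) -> mem h.
Proof.
move=> hf hg Hs Hh.
have hT : T M h = T M (fun k => pm (f k) (g k)).
  by apply: ktens_ext => k hk; rewrite Hh.
have hT' : T M (fun k => pm (g k) (f k)) = T M (fun k => pm (f k) (g k)).
  by apply: ktens_ext => k hk; rewrite pm_comm.
set P := \prod_(k < M) ph (f k) (g k).
have hQ : \prod_(k < M) ph (g k) (f k) = - P.
  under eq_bigr do rewrite ph_swap.
  by rewrite big_split /= Hs mulN1r.
have hP2 : P ^+ 2 = -1.
  by rewrite /P -prodrXl; under eq_bigr do rewrite ph_sq; exact: Hs.
have key : (iC R *: O (T M f)) *m (iC R *: O (T M g))
         - (iC R *: O (T M g)) *m (iC R *: O (T M f))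
         = (- (2%:R * P)) *: O (T M h).
  rewrite -!scalemxAl -!scalemxAr !scalerA !O_mul !T_mul hQ hT' hT !O_scale.
  rewrite !scalerA -scalerBl; congr (_ *: _).
  by rewrite -/P iCi !mulN1r opprK -opprD -mulr2n mulr_natl.
have hb := lie_bracket hf hg; rewrite key in hb.
have : (P - iC R) * (P + iC R) = 0 by rewrite -subr_sqr hP2 expr2 iCi subrr.
move/eqP; rewrite mulf_eq0 => /orP [/eqP e | /eqP e].
- have eP : P = iC R by apply/eqP; rewrite -subr_eq0 e.
  rewrite eP in hb.
  have := lie_scale (- (2%:R^-1)) hb; rewrite /mem; congr lie_gen.
  rewrite scalerA; congr (_ *: _).
  rewrite rmorphN fmorphV rmorph_nat mulrNN mulrA mulVf ?mul1r //; exact: two_neq0.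
- have eP : P = - iC R by apply/eqP; rewrite -subr_eq0 opprK e.
  rewrite eP in hb.
  have := lie_scale (2%:R^-1) hb; rewrite /mem; congr lie_gen.
  rewrite scalerA; congr (_ *: _).
  rewrite fmorphV rmorph_nat !mulrN opprK mulrA mulVf ?mul1r //; exact: two_neq0.
Qed.
Definition upd (f : nat -> pauli) j a := fun k => if k == j then a else f k.
Definition z : nat -> pauli := fun _ => P0.
Definition pair j a b := upd (upd z j a) j.+1 b.
Definition nxt a := match a with P0 => PX | PX => PY | PY => PZ | PZ => PX end.
Lemma nxt_nz a : nxt a != P0. Proof. by case: a. Qed.
Lemma sg_nxt a : a != P0 -> sg a (nxt a) = -1. Proof. by case: a. Qed.
Lemma pm_nxt a : a != P0 -> pm a (nxt a) != P0. Proof. by case: a. Qed.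
Lemma pm_neq a b : a != b -> pm a b != P0. Proof. by case: a; case: b. Qed.
Lemma third a b : a != P0 -> b != P0 -> a != b -> sg a (pm a b) = -1.
Proof. by case: a; case: b. Qed.
Lemma third2 a b : pm a (pm a b) = b.
Proof. by case: a; case: b. Qed.

Lemma mem_ext f g : (forall k, (k < M)%N -> f k = g k) -> mem f -> mem g.
Proof.
move=> H; rewrite /mem; have -> : T M g = T M f by apply: ktens_ext => k hk; rewrite H.
by [].
Qed.

Lemma mem_comm1 f g h j : mem f -> mem g -> (j < M)%N ->
  (forall k, (k < M)%N -> k != j -> sg (f k) (g k) = 1) -> sg (f j) (g j) = -1 ->
  (forall k, (k < M)%N -> h k = pm (f k) (g k)) -> mem h.
Proof.
move=> hf hg hj H1 H2; apply: mem_comm hf hg _.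
rewrite (bigD1 (Ordinal hj)) //= H2 big1 ?mulr1 // => k hk.
apply: H1 => //; by [].
Qed.
Ltac ext_tac := let k := fresh "k" in let hk := fresh "hk" in
  move=> k hk; rewrite /pair /upd /z;
  repeat (match goal with |- context [?x == ?y] => case: (x =P y) => /= ? end);
  try subst; try lia; try done.

Variable (hX : forall j, (j < M)%N -> mem (upd z j PX))
         (hY : forall j, (j < M)%N -> mem (upd z j PY)).

Lemma single j a : (j < M)%N -> a != P0 -> mem (upd z j a).
Proof.
move=> hj; case: a => // _; try by [apply: hX | apply: hY].
apply (@mem_comm1 _ _ (upd z j PZ) j (hX hj) (hY hj) hj); rewrite /upd ?eqxx //.
- by move=> k _ /negbTE ->.
- by move=> k _; case: eqP.
Qed.

Lemma rotate f j b h : mem f -> (j < M)%N -> f j != P0 -> b != P0 ->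
  (forall k, (k < M)%N -> h k = if k == j then b else f k) -> mem h.
Proof.
move=> hf hj hfj hb Hh.
case: (eqVneq (f j) b) => [e|ne].
  apply: mem_ext hf => k hk; rewrite Hh //; case: eqP => // ->; by rewrite e.
apply (@mem_comm1 _ _ h j hf (single hj (pm_neq ne)) hj); rewrite /upd /z ?eqxx.
- by move=> k _ /negbTE ->; rewrite sg_a0.
- exact: third.
- by move=> k hk; rewrite Hh //; case: eqP => [->|]; rewrite ?third2 ?pm_a0.
Qed.
Lemma neqSn j : (j == j.+1) = false. Proof. by elim: j. Qed.
Lemma neqnS j : (j.+1 == j) = false. Proof. by elim: j. Qed.

Variable hXX : forall j, (j.+1 < M)%N -> mem (pair j PX PX).

Lemma pair_all j a b : (j.+1 < M)%N -> a != P0 -> b != P0 -> mem (pair j a b).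
Proof.
move=> hj ha hb.
have h1 : mem (pair j a PX).
  apply: (@rotate (pair j PX PX) j a (pair j a PX) (hXX hj) (ltnW hj)) => //.
    by rewrite /pair /upd eqxx neqSn.
  ext_tac.
apply: (@rotate (pair j a PX) j.+1 b (pair j a b) h1 hj) => //.
  by rewrite /pair /upd eqxx.
ext_tac.
Qed.
Ltac side := (match goal with |- forall _, _ => intros | _ => idtac end); rewrite /pair /upd /z;
  repeat (match goal with |- context [?x == ?y] => case: (x =P y) => /= ? end);
  try subst; rewrite ?sg_a0 ?pm_a0; try lia; try done;
  try exact: sg_nxt; try exact: pm_nxt.

Lemma main n : (n <= M)%N -> forall f, (forall k, (n <= k)%N -> f k = P0) ->
  (exists2 k, (k < n)%N & f k != P0) -> mem f.
Proof.
elim: n => [|n IH] hn f hf [k hk hfk]; first by [].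
case: (eqVneq (f n) P0) => [fn0|fnz].
  apply: (IH (ltnW hn) f).
    move=> k' hk'; case: (eqVneq k' n) => [->//|ne]; apply: hf; lia.
  exists k => //; case: (eqVneq k n) => [e|ne]; [by rewrite e fn0 eqxx in hfk | lia].
case: n IH hn hf hk fnz => [|m] IH hn hf hk fnz.
  apply: (mem_ext _ (single hn fnz)) => k' hk'; rewrite /upd /z.
  case: eqP => [->//|ne]; symmetry; apply: hf; lia.
case: (eqVneq (f m) P0) => [fm0|fmnz].
  have m1 : mem (upd (upd f m.+1 P0) m PZ).
    apply: IH; first lia.
      move=> k' hk'; rewrite /upd; case: eqP => [e|ne]; first lia.
      case: eqP => // ne2; apply: hf; lia.
    by exists m => //; rewrite /upd eqxx.
  have m2 : mem (fun k => pm (upd (upd f m.+1 P0) m PZ k) (pair m PX (f m.+1) k)).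
    apply: (@mem_comm1 _ (pair m PX (f m.+1)) _ m m1 (pair_all hn _ fnz) (ltnW hn)) => //; side.
  have m3 : mem (fun k => pm (pm (upd (upd f m.+1 P0) m PZ k) (pair m PX (f m.+1) k))
                           (pair m PY (nxt (f m.+1)) k)).
    apply: (@mem_comm1 _ (pair m PY (nxt (f m.+1))) _ m.+1 m2
             (pair_all hn _ (nxt_nz _)) hn) => //; side.
  apply: (@rotate _ m.+1 (f m.+1) f m3 hn) => //;
    [rewrite /pair /upd /z eqxx neqnS /=; exact: pm_nxt | side].
have m1 : mem (upd f m.+1 P0).
  apply: IH; first lia.
    move=> k' hk'; rewrite /upd; case: eqP => // ne2; apply: hf; lia.
  by exists m => //; rewrite /upd neqSn.
have m2 : mem (fun k => pm (upd f m.+1 P0 k) (pair m (nxt (f m)) (f m.+1) k)).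
  apply: (@mem_comm1 _ (pair m (nxt (f m)) (f m.+1)) _ m m1
           (pair_all hn (nxt_nz _) fnz) (ltnW hn)) => //; side.
apply: (@rotate _ m (f m) f m2 (ltnW hn)) => //;
  [rewrite /pair /upd /z eqxx neqSn /=; exact: pm_nxt | side].
Qed.
End S.
HB.instance Definition _ (R : rcfType) (n : nat) :=
  Monoid.isLaw.Build 'M[R[i]]_n 1%:M (@mulmx _ n n n) (@mulmxA _ n n n n) (@mul1mx _ n n) (@mulmx1 _ n n).
Unset Implicit Arguments.
Theorem lemma2 (R : rcfType) (N M : nat) (hN : (2 <= N)%N) (hM : (1 <= M)%N)
  (E : 'I_N -> R) (hE : \sum_(j < N) E j = 0)
  (d : nat -> R) (hbar : R) (hhbar : 0 < hbar) (omega : nat -> R) (c : nat -> R)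
  (g : nat -> 'I_2 -> {ffun 'I_M -> bool} -> R) :
  let L := lie_gen (ctrl_gens (H0 E d hbar omega c g)) in
  (forall j : nat, (j.+1 < M)%N ->
     L (iC R *: otimes (1%:M : 'M[R[i]]_N)
                     (sigma_site R M j PX *m sigma_site R M j.+1 PX))) ->
  forall al : 'I_M -> pauli, (exists j, al j <> P0) ->
     L (iC R *: otimes (1%:M : 'M[R[i]]_N) (sigma_string R al)).
Proof.
move=> L hXX al [j0 hj0].
set S := ctrl_gens (H0 E d hbar omega c g).
have hsite : forall j a, sigma_site R M j a = T R M (upd (z) j a).
  move=> j a; rewrite /sigma_site /T; apply: ktens_ext => k _; rewrite /upd /z.
  by case: (k == j).
have hX : forall j, (j < M)%N -> mem S (upd z j PX).
  move=> j hj; rewrite /mem /O -hsite; apply: lie_base; right; exists (Ordinal hj); left.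
  by [].
have hY : forall j, (j < M)%N -> mem S (upd z j PY).
  move=> j hj; rewrite /mem /O -hsite; apply: lie_base; right; exists (Ordinal hj); right.
  by [].
have hXX' : forall j, (j.+1 < M)%N -> mem S (pair j PX PX).
  move=> j hj; have := hXX j hj; rewrite /mem /O /L.
  have -> : sigma_site R M j PX *m sigma_site R M j.+1 PX = T R M (pair j PX PX).
    rewrite /sigma_site ktens_mul /T; apply: ktens_ext => k _; rewrite /pair /upd /z.
    case: eqP => [->|?]; rewrite ?eqxx ?neqSn /= ?mul1mx ?mulmx1 //.
    by case: (k == j.+1).
  by [].
pose fa k := oapp al P0 (insub k : option 'I_M).
have hsig : sigma_string R al = T R M fa.
  rewrite /sigma_string (eq_bigr (fun j : 'I_M => sigma_site R M j (fa j))); last first.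
    by move=> i _; rewrite /fa valK.
  rewrite -(big_mkord xpredT (fun j => sigma_site R M j (fa j))).
  have gen : forall m, (m <= M)%N -> \big[mulmx/1%:M]_(0 <= j < m) sigma_site R M j (fa j)
      = ktens M (fun k => pauli_mx R (if (k < m)%N then fa k else P0)).
    elim => [_|m IHm hm].
      rewrite big_geq // -(ktens_one R M); apply: ktens_ext => k _; by rewrite ltn0.
    rewrite big_nat_recr //.
    change (mulmx (\big[mulmx/1%:M]_(0 <= i < m) sigma_site R M i (fa i)) (sigma_site R M m (fa m)) = ktens M (fun k : nat => pauli_mx R (if (k < m.+1)%N then fa k else P0))).
    rewrite IHm; last exact: ltnW.
    rewrite /sigma_site ktens_mul; apply: ktens_ext => k _.
    case: (ltngtP k m) => [h|h|->]; rewrite ?eqxx.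
    - rewrite ltnS (ltnW h) mulmx1; reflexivity.
    - rewrite ltnS leqNgt h /= mulmx1; reflexivity.
    - rewrite ltnSn; exact: mul1mx.
  rewrite gen; last exact: leqnn.
  rewrite /T; apply: ktens_ext => k hk; rewrite hk; reflexivity.
rewrite /L hsig.
apply: (main hX hY hXX' (leqnn M)).
  by move=> k hk; rewrite /fa insubF // ltnNge hk.
exists (val j0); first exact: ltn_ord.
by rewrite /fa valK /=; apply/eqP.
Qed.
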